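(* Let $G$ be a $k$-degenerate graph with maximum degree $\Delta(G)$ and let $H$ be an $l$-degenerate graph. Then $AT(G+_T H)\le \max\{2\Delta(G),\,k+l\}+1$.
   Context: A graph is $k$-degenerate if its vertices can be successively deleted so that each deleted vertex has degree at most $k$ at the time of deletion. For an orientation $D$, a subdigraph is Eulerian if every vertex has equal in- and outdegree in it; $D$ is an AT-orientation if the numbers of Eulerian subgraphs with an even and with an odd number of arcs differ; $AT(G)$ is the smallest $k$ such that $G$ has an AT-orientation of maximum outdegree at most $k-1$. $T(G)$ has vertex set $V(G)\cup E(G)$: it consists of $G$, together with, for each edge $e=xy$, edges $ex$ and $ey$, and edges $ee'$ whenever edges $e,e'$ are adjacent in $G$. $G+_T H$ has vertex set $(V(G)\cup E(G))\times V(H)$, with $(u_1,u_2)\sim(v_1,v_2)$ iff [$u_1=v_1\in V(G)$ and $u_2v_2\in E(H)$] or [$u_2=v_2$ and $u_1v_1\in E(T(G))$]. *)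

(* Defs.v *)
From mathcomp Require Import all_boot.
Set Implicit Arguments. Unset Strict Implicit. Unset Printing Implicit Defensive.

(* Finite simple graphs are given as a relation [g : rel V] on a finType,
   with hypotheses [symmetric g] and [irreflexive g] stated in the theorem. *)

Section Graphs.
Variable V : finType.
Implicit Type g : rel V.

(* k-degenerate: there is an enumeration s of all vertices (deletion order)
   such that each vertex x has at most k neighbours among the vertices deleted
   after it (i.e. degree <= k in the graph remaining when x is deleted). *)
Definition degenerate g (k : nat) : Prop :=
  exists s : seq V, [/\ uniq s, (forall v, v \in s) &
    forall (s1 s2 : seq V) (x : V), s = s1 ++ x :: s2 ->
      #|[set y in s2 | g x y]| <= k].

Definition deg g (v : V) : nat := #|[set y | g v y]|.

Definition maxdeg g : nat := \max_(v : V) deg g v.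

Definition is_edge g : pred {set V} :=
  fun A => [exists x, exists y, g x y && (A == [set x; y])].

Definition edges g := {A : {set V} | is_edge g A}.

Definition Trel g : rel (V + edges g) :=
  fun a b => match a, b with
  | inl u, inl v => g u v
  | inl u, inr e => u \in val e
  | inr e, inl u => u \in val e
  | inr e, inr f => (e != f) && (val e :&: val f != set0)
  end.
End Graphs.

Definition plusT (V W : finType) (g : rel V) (h : rel W)
  : rel ((V + edges g) * W) :=
  fun a b =>
    (match a.1, b.1 with inl u, inl v => (u == v) && h a.2 b.2 | _, _ => false end)
    || ((a.2 == b.2) && @Trel V g a.1 b.1).

Section AT.
Variable X : finType.
Variable adj : rel X.

Definition is_orientation (D : {set X * X}) : bool :=
  [forall x, forall y, adj x y == (((x, y) \in D) || ((y, x) \in D))] &&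
  [forall x, forall y, ((x, y) \in D) ==> ((y, x) \notin D)].

Definition outdeg (D : {set X * X}) (x : X) : nat := #|[set y | (x, y) \in D]|.

Definition eulerian_sub (D S : {set X * X}) : bool :=
  (S \subset D) &&
  [forall v, #|[set a in S | a.1 == v]| == #|[set a in S | a.2 == v]|].

Definition n_even_euler (D : {set X * X}) : nat :=
  #|[set S : {set X * X} | eulerian_sub D S & ~~ odd #|S|]|.
Definition n_odd_euler (D : {set X * X}) : nat :=
  #|[set S : {set X * X} | eulerian_sub D S & odd #|S|]|.

Definition AT_orientation (D : {set X * X}) : bool :=
  is_orientation D && (n_even_euler D != n_odd_euler D).

Definition has_AT (k : nat) : bool :=
  [exists D : {set X * X}, AT_orientation D && [forall x, outdeg D x < k]].

(* Any orientation has maximum outdegree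
   <= #|X| - 1, so the minimum (which exists: acyclic orientations are AT)
   lies in [0, #|X|]; the default value #|X|.+1 is never attained. *)
Definition AT : nat := \big[minn/#|X|.+1]_(k < #|X|.+1 | has_AT k) k.
End AT.
Arguments plusT [V W] g h _ _.

(* Main.v *)
Require Import Defs.
From mathcomp Require Import all_boot.
Set Implicit Arguments. Unset Strict Implicit. Unset Printing Implicit Defensive.

Section Acyc.
Variable X : finType.
Variable adj : rel X.
Hypothesis adjS : symmetric adj.
Hypothesis adjI : irreflexive adj.
Variable r : X -> nat.
Hypothesis rI : injective r.

Definition Dr : {set X * X} := [set p | adj p.1 p.2 && (r p.1 < r p.2)].

Lemma Dr_orient : is_orientation adj Dr.
Proof.
apply/andP; split; apply/forallP=> x; apply/forallP=> y; rewrite !inE /=.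
  case Hxy: (adj x y) => /=.
    rewrite (adjS y x) Hxy /=.
    have: x != y by apply: contraTneq Hxy => ->; rewrite adjI.
    move=> /negP nxy; apply/eqP; case: (ltngtP (r x) (r y)) => // /rI E.
    by case: nxy; rewrite E.
  by rewrite adjS Hxy.
apply/implyP=> /andP[_ H]; apply/negP=> /andP[_ H']; move: (ltn_trans H H').
by rewrite ltnn.
Qed.

Lemma Dr_euler S : eulerian_sub Dr S -> S = set0.
Proof.
case/andP=> sub /forallP Eq.
apply/eqP; apply/set0Pn; case=> a0 Ha0.
case: (arg_minnP (fun a : X * X => r a.1) Ha0) => a Ha Hmin.
have := Eq a.1; move/eqP=> E.
have: 0 < #|[set b in S | b.2 == a.1]|.
  rewrite -E; apply/card_gt0P; exists a; by rewrite inE eqxx andbT.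
case/card_gt0P=> b; rewrite inE => /andP[Hb /eqP Hb2].
have := subsetP sub _ Hb; rewrite inE => /andP[_ Hlt].
have := Hmin b Hb; rewrite -Hb2 => Hle.
by move: (leq_ltn_trans Hle Hlt); rewrite ltnn.
Qed.

Lemma Dr_AT : AT_orientation adj Dr.
Proof.
rewrite /AT_orientation Dr_orient /= /n_even_euler /n_odd_euler.
have -> : [set S | eulerian_sub Dr S & ~~ odd #|S|] = [set set0].
  apply/setP=> S; rewrite !inE; apply/andP/eqP.
    by case=> /Dr_euler.
  move=> ->; split; last by rewrite cards0.
  by rewrite /eulerian_sub sub0set; apply/forallP=> v; apply/eqP; transitivity 0; [|symmetry]; apply/eqP; rewrite cards_eq0; apply/eqP/setP=> z; by rewrite !inE.
have -> : [set S | eulerian_sub Dr S & odd #|S|] = set0.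
  apply/setP=> S; rewrite !inE; apply/andP; case=> /Dr_euler -> ; by rewrite cards0.
by rewrite cards1 cards0.
Qed.

Lemma bigmin_le (I : finType) (P : pred I) (F : I -> nat) x0 j :
  P j -> \big[minn/x0]_(i | P i) F i <= F j.
Proof.
move=> Pj; rewrite unlock /reducebig.
have : j \in index_enum I by rewrite mem_index_enum.
elim: (index_enum I) => //= a s IH; rewrite inE => /orP[/eqP <-|js].
  by rewrite Pj geq_minl.
case: (P a) => //=; first by rewrite geq_min IH ?orbT. by apply: IH.
Qed.

Lemma AT_le d : (forall x, #|[set y | adj x y && (r x < r y)]| <= d) -> AT adj <= d.+1.
Proof.
move=> Hd.
have HA : has_AT adj d.+1.
  apply/existsP; exists Dr; rewrite Dr_AT /=; apply/forallP=> x.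
  rewrite ltnS /outdeg; apply: leq_trans (Hd x); apply: subset_leq_card.
  by apply/subsetP=> y; rewrite !inE.
rewrite /AT; case: (ltnP d.+1 #|X|.+1) => H.
  exact: (bigmin_le (fun k : 'I_#|X|.+1 => val k) _ (j := Ordinal H)).
apply: leq_trans H; elim/big_ind: _ => //.
  by move=> p q Hp _; rewrite geq_min Hp.
move=> i _; exact: ltnW (ltn_ord i).
Qed.
End Acyc.

Lemma mem_drop_index (T : eqType) (s : seq T) n y :
  uniq s -> y \in s -> (y \in drop n s) = (n <= index y s).
Proof.
move=> us ys; case: (leqP n (index y s)) => H.
  have Hi : index y s - n < size (drop n s).
    by rewrite size_drop; move: (index_mem y s); rewrite ys => Hl; rewrite ltn_sub2r // (leq_ltn_trans H Hl).
  have -> : y = nth y (drop n s) (index y s - n) by rewrite nth_drop subnKC // nth_index.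
  exact: mem_nth.
apply/negP=> yd.
have yt : y \in take n s by rewrite in_take.
move: us; rewrite -(cat_take_drop n s) cat_uniq => /and3P[_ /hasP nh _].
by apply: nh; exists y.
Qed.

Lemma degen_rank (V : finType) (g : rel V) k : degenerate g k ->
  exists s : seq V, [/\ uniq s, (forall v, v \in s) &
    forall x, #|[set y | g x y & index x s < index y s]| <= k].
Proof.
case=> s [us alls H]; exists s; split=> // x.
have E : s = take (index x s) s ++ x :: drop (index x s).+1 s.
  by rewrite -{1}(cat_take_drop (index x s) s) (drop_nth x) ?nth_index ?index_mem.
apply: leq_trans (H _ _ _ E); apply: subset_leq_card; apply/subsetP=> y.
by rewrite !inE mem_drop_index // => /andP[-> ->].
Qed.

Section Edge.
Variable V : finType.
Variable g : rel V.
Hypothesis gS : symmetric g.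
Hypothesis gI : irreflexive g.

Lemma edge_other (f : edges g) x : x \in val f -> exists2 z, g x z & val f = [set x; z].
Proof.
case: f => A /= /existsP[a /existsP[c /andP[Hac /eqP ->]]] /set2P[->|->].
  by exists c.
by exists a; [rewrite gS | rewrite setUC].
Qed.

Definition phi (x y : V) (z : V + V) : option (V + edges g) :=
  match z with
  | inl z => if z == y then Some (inl x) else omap inr (insub [set x; z])
  | inr z => if z == x then Some (inl y) else omap inr (insub [set y; z])
  end.

Lemma edge_nbr_card (e : edges g) :
  #|[set b | @Trel V g (inr e) b]| <= 2 * maxdeg g.
Proof.
have [x [y [gxy ve]]] : exists x y, g x y /\ val e = [set x; y].
  case: e => A /= /existsP[a /existsP[c /andP[Hac /eqP ->]]]; by exists a, c.
set NT := [set b | @Trel V g (inr e) b].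
set D := (inl @: [set z | g x z]) :|: (inr @: [set z | g y z]) : {set V + V}.
have H1 : #|NT| = #|Some @: NT| by rewrite card_imset //; exact: Some_inj.
have H2 : Some @: NT \subset phi x y @: D.
  apply/subsetP=> ob /imsetP[b]; rewrite inE => Hb ->.
  case: b Hb => [u|f] /=.
    rewrite ve => /set2P[->|->].
      apply/imsetP; exists (inl y); last by rewrite /= eqxx.
      by rewrite in_setU; apply/orP; left; apply/imsetP; exists y; rewrite ?inE.
    apply/imsetP; exists (inr x); last by rewrite /= eqxx.
    by rewrite in_setU; apply/orP; right; apply/imsetP; exists x; rewrite ?inE // gS.
  case/andP=> nef /set0Pn[z]; rewrite inE ve => /andP[/set2P[->|->] zf].
    case: (edge_other zf) => c gxc vf.
    apply/imsetP; exists (inl c).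
      by rewrite in_setU; apply/orP; left; apply/imsetP; exists c; rewrite ?inE.
    rewrite /= -vf valK /=.
    case: eqP => // cy; case/negP: nef; apply/eqP/val_inj; by rewrite ve vf cy.
  case: (edge_other zf) => c gyc vf.
  apply/imsetP; exists (inr c).
    by rewrite in_setU; apply/orP; right; apply/imsetP; exists c; rewrite ?inE.
  rewrite /= -vf valK /=.
  case: eqP => // cx; case/negP: nef; apply/eqP/val_inj; by rewrite ve vf cx setUC.
have H3 : #|D| <= deg g x + deg g y.
  apply: leq_trans (leq_card_setU _ _) _.
  by apply: leq_add; apply: leq_imset_card.
rewrite H1; apply: leq_trans (subset_leq_card H2) _.
apply: leq_trans (leq_imset_card _ _) _; apply: leq_trans H3 _.
rewrite mul2n -addnn /maxdeg; apply: leq_add; [exact: (leq_bigmax (F := deg g) x)|exact: (leq_bigmax (F := deg g) y)].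
Qed.
End Edge.

Section Main.
Variables (V W : finType) (g : rel V) (h : rel W) (k l : nat).
Hypotheses (gS : symmetric g) (gI : irreflexive g) (hS : symmetric h) (hI : irreflexive h).
Variables (sg : seq V) (sh : seq W).
Hypotheses (usg : uniq sg) (allg : forall v, v \in sg)
  (bg : forall x, #|[set y | g x y & index x sg < index y sg]| <= k).
Hypotheses (ush : uniq sh) (allh : forall v, v \in sh)
  (bh : forall x, #|[set y | h x y & index x sh < index y sh]| <= l).

Let EW := #|{: edges g * W}|.
Let M := size sh.

Definition rk (a : (V + edges g) * W) : nat :=
  match a.1 with
  | inr e => enum_rank (e, a.2)
  | inl v => EW + index v sg * M + index a.2 sh
  end.

Lemma idx_lt w : index w sh < M.
Proof. by rewrite /M index_mem. Qed.

Lemma rk_inj : injective rk.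
Proof.
case=> [[v|e] w] [[v'|e'] w']; rewrite /rk; cbn [fst snd].
- move=> E.
  have Hw := idx_lt w; have Hw' := idx_lt w'.
  have E2 : index v sg * M + index w sh = index v' sg * M + index w' sh.
    by move/eqP: E; rewrite -!addnA eqn_add2l => /eqP.
  have M0 : 0 < M by apply: leq_ltn_trans Hw.
  have Ev : index v sg = index v' sg.
    by move: (congr1 (divn^~ M) E2); rewrite !divnMDl // !divn_small // !addn0.
  have Ew : index w sh = index w' sh.
    by move: (congr1 (modn^~ M) E2); rewrite !modnMDl !modn_small.
  have -> : v = v' by apply: (index_inj v (allg v) (allg v') Ev).
  have -> : w = w' by apply: (index_inj w (allh w) (allh w') Ew).
  by [].
- move=> E; have := ltn_ord (enum_rank (e', w')); rewrite -E.
  by rewrite ltnNge -addnA leq_addr.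
- move=> E; have := ltn_ord (enum_rank (e, w)); rewrite E.
  by rewrite ltnNge -addnA leq_addr.
- by move/val_inj/enum_rank_inj => [-> ->].
Qed.


Lemma rk_bound x :
  #|[set y | plusT g h x y && (rk x < rk y)]| <= maxn (2 * maxdeg g) (k + l).
Proof.
case: x => [[v|e] w].
- set A := [set w' | h w w' & index w sh < index w' sh].
  set B := [set u | g v u & index v sg < index u sg].
  have sub : [set y | plusT g h (inl v, w) y && (rk (inl v, w) < rk y)] \subset
     ((fun w' => (inl v, w')) @: A) :|: ((fun u => (inl u, w)) @: B).
    apply/subsetP=> -[[u|f] w']; rewrite inE /plusT /rk; cbn [fst snd Trel].
      case/andP=> /orP[/andP[/eqP <- hww]|/andP[/eqP <- gvu]] Hlt.
        rewrite in_setU; apply/orP; left; apply/imsetP; exists w' => //.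
        by rewrite inE hww /= -(ltn_add2l (EW + index v sg * M)).
      rewrite in_setU; apply/orP; right; apply/imsetP; exists u => //.
      rewrite inE gvu /=.
      by move: Hlt; rewrite ltn_add2r ltn_add2l ltn_mul2r => /andP[].
    case/andP=> _ Hlt; exfalso.
    have H1 : EW <= EW + index v sg * M + index w sh by rewrite -addnA leq_addr.
    have H3 := ltn_trans (leq_ltn_trans H1 Hlt) (ltn_ord (enum_rank (f, w'))).
    have : EW < EW := H3.
    by rewrite ltnn.
  apply: leq_trans (subset_leq_card sub) _.
  apply: leq_trans (leq_card_setU _ _) _.
  apply: leq_trans (leq_maxr _ _); rewrite addnC; apply: leq_add.
    by apply: leq_trans (leq_imset_card _ _) _; apply: bg.
  by apply: leq_trans (leq_imset_card _ _) _; apply: bh.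
- set NT := [set b | @Trel V g (inr e) b].
  have sub : [set y | plusT g h (inr e, w) y && (rk (inr e, w) < rk y)] \subset
     (fun b => (b, w)) @: NT.
    apply/subsetP=> -[b w']; rewrite inE /plusT; cbn [fst snd].
    case/andP=> /andP[/eqP <- Hb] _; apply/imsetP; exists b => //; by rewrite inE.
  apply: leq_trans (subset_leq_card sub) _.
  apply: leq_trans (leq_imset_card _ _) _.
  apply: leq_trans (leq_maxl _ _); exact: edge_nbr_card.
Qed.
End Main.

Lemma plusT_sym (V W : finType) (g : rel V) (h : rel W) :
  symmetric g -> symmetric h -> symmetric (plusT g h).
Proof.
move=> gS hS [a w] [b w']; rewrite /plusT; cbn [fst snd].
rewrite (eq_sym w'); congr (_ || (_ && _)).
  by case: a => [u|e]; case: b => [u'|f] //; rewrite eq_sym hS.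
case: a => [u|e]; case: b => [u'|f] //=.
by rewrite eq_sym setIC.
Qed.

Lemma plusT_irr (V W : finType) (g : rel V) (h : rel W) :
  irreflexive g -> irreflexive h -> irreflexive (plusT g h).
Proof.
move=> gI hI [a w]; rewrite /plusT; cbn [fst snd].
case: a => [u|e] /=; first by rewrite gI hI !andbF.
by rewrite !eqxx.
Qed.

Theorem corollary3p10 (V W : finType) (g : rel V) (h : rel W) (k l : nat) :
  symmetric g -> irreflexive g -> symmetric h -> irreflexive h ->
  degenerate g k -> degenerate h l ->
  AT (plusT g h) <= (maxn (2 * maxdeg g) (k + l)).+1.
Proof.
move=> gS gI hS hI dg dh.
case: (degen_rank dg) => sg [usg allg bg].
case: (degen_rank dh) => sh [ush allh bh].
apply: (AT_le (plusT_sym gS hS) (plusT_irr gI hI) (rk_inj (g := g) allg allh)).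
exact: (rk_bound gS bg bh).
Qed.
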